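(* Let $J=p\ge1$, $\sigma_\varepsilon^2>0$, $\sigma_\gamma^2>0$, $0\le\rho\le1$, and let $\mathbf{\Sigma}_\gamma=\sigma_\gamma^2\big((1-\rho)\mathbf{I}_J+\rho\mathbf{1}_J\mathbf{1}_J^{\mathrm T}\big)$ (compound symmetry). Let $\mathbf{A}_{\bm\beta}$ be a nonsingular $J\times J$ matrix and $I>0$. For an approximate design $\xi=(I_1,\dots,I_J)$ (reals $I_j\ge0$ with $\sum_jI_j=I$) let $$\mathbf{M}_{\bm\beta}(\xi)=\mathbf{A}_{\bm\beta}^{\mathrm T}\mathbf{M}_0(\xi)^{1/2}\big(\sigma_\varepsilon^2\mathbf{I}_J+\mathbf{M}_0(\xi)^{1/2}\mathbf{\Sigma}_\gamma\mathbf{M}_0(\xi)^{1/2}\big)^{-1}\mathbf{M}_0(\xi)^{1/2}\mathbf{A}_{\bm\beta},\quad \mathbf{M}_0(\xi)^{1/2}=\mathrm{diag}(\sqrt{I_1},\dots,\sqrt{I_J}).$$ Then the uniform design $\xi^*=(I/J,\dots,I/J)$ is the $D$-optimal approximate design.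
   Context: $\mathbf{A}_{\bm\beta}$ is the Jacobian of the mean response curve at a fixed parameter $\bm\beta$. $\bm\beta$ is estimable under $\xi$ if $\mathbf{A}_{\bm\beta}$ has full column rank and its columns lie in the column space of $\mathrm{diag}(I_1,\dots,I_J)$. A design $\xi^*$ is $D$-optimal if $\log\det\mathbf{M}_{\bm\beta}(\xi^* )\ge\log\det\mathbf{M}_{\bm\beta}(\xi)$ for all approximate designs $\xi$ with total $I$ under which $\bm\beta$ is estimable. *)

(* Defs.v *)
From mathcomp Require Import all_boot all_order all_algebra.
From mathcomp Require Import all_classical all_reals all_analysis.
Set Implicit Arguments. Unset Strict Implicit. Unset Printing Implicit Defensive.
Import Order.TTheory GRing.Theory Num.Theory.
Local Open Scope ring_scope.

Section Defs.
Variables (R : realType) (J : nat).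

Definition approx_design (I : R) (xi : 'I_J -> R) : Prop :=
  (forall j, 0 <= xi j) /\ \sum_(j < J) xi j = I.

Definition M0 (xi : 'I_J -> R) : 'M[R]_J := diag_mx (\row_j xi j).
Definition M0half (xi : 'I_J -> R) : 'M[R]_J := diag_mx (\row_j Num.sqrt (xi j)).

Definition Sigma_gamma (sg2 rho : R) : 'M[R]_J :=
  sg2 *: ((1 - rho) *: (1%:M : 'M[R]_J) + rho *: const_mx 1).

Definition Mbeta (A : 'M[R]_J) (se2 sg2 rho : R) (xi : 'I_J -> R) : 'M[R]_J :=
  A^T *m M0half xi
      *m invmx (se2 *: 1%:M + M0half xi *m Sigma_gamma sg2 rho *m M0half xi)
      *m M0half xi *m A.

(* beta estimable under xi: A has full column rank and its columns lie in the
   column space of diag(I_1,...,I_J) *)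
Definition estimable (A : 'M[R]_J) (xi : 'I_J -> R) : Prop :=
  \rank A = J /\ (A^T <= (M0 xi)^T)%MS.

Definition uniform_design (I : R) : 'I_J -> R := fun _ => I / J%:R.

Definition D_optimal (A : 'M[R]_J) (se2 sg2 rho I : R) (xis : 'I_J -> R) : Prop :=
  approx_design I xis /\ estimable A xis /\
  forall xi, approx_design I xi -> estimable A xi ->
    ln (\det (Mbeta A se2 sg2 rho xi)) <= ln (\det (Mbeta A se2 sg2 rho xis)).

End Defs.

(* Main.v *)
Require Import Defs.
From mathcomp Require Import all_boot all_order all_algebra.
From mathcomp Require Import all_classical all_reals all_analysis.
From mathcomp Require Import ring lra.
Import Order.TTheory GRing.Theory Num.Theory.
Local Open Scope ring_scope.
Lemma det_rank1 (R : comPzRingType) n (u : 'cV[R]_n) (v : 'rV[R]_n) :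
  \det (1%:M + u *m v) = 1 + (v *m u) 0 0.
Proof.
pose B := block_mx (1%:M : 'M[R]_n) (- u) v (1%:M : 'M[R]_1).
have e1 : B = block_mx 1%:M 0 v 1%:M *m block_mx 1%:M (- u) 0 (1%:M + v *m u).
  rewrite mulmx_block !mul1mx ?mul0mx ?mulmx0 ?mulmx1 ?addr0 ?add0r.
  by rewrite /B mulmxN addrCA addNr addr0.
have e2 : B = block_mx (1%:M + u *m v) (- u) 0 1%:M *m block_mx 1%:M 0 v 1%:M.
  rewrite mulmx_block !mul1mx ?mul0mx ?mulmx0 ?mulmx1 ?addr0 ?add0r.
  by rewrite /B mulNmx addrK.
have := congr1 determinant e1; rewrite {1}e2 !det_mulmx det_lblock det_ublock.
rewrite !det1 ?mul1r ?mulr1 det_ublock det1 mul1r det_mx11 !mxE eqxx /=.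
by move=> ->.
Qed.

Lemma aux_diag (R : realType) (se2 sg2 rho s : R) :
  se2 + sg2 * (1 - rho) * (s * s) != 0 ->
  se2 * 1 + s * (sg2 * ((1 - rho) * 1 + rho * 1)) * s =
  (se2 + sg2 * (1 - rho) * (s * s)) *
  (1 + sg2 * rho * s / (se2 + sg2 * (1 - rho) * (s * s)) * s).
Proof. by move=> h; field. Qed.

Lemma aux_off (R : realType) (se2 sg2 rho s t xi : R) :
  se2 + sg2 * (1 - rho) * xi != 0 ->
  se2 * 0 + s * (sg2 * ((1 - rho) * 0 + rho * 1)) * t =
  (se2 + sg2 * (1 - rho) * xi) *
  (0 + sg2 * rho * s / (se2 + sg2 * (1 - rho) * xi) * t).
Proof. by move=> h; field. Qed.

Lemma K_eq (R : realType) (J : nat) (se2 sg2 rho : R) (x : 'I_J -> R)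
  (hse : 0 < se2) (hsg : 0 < sg2) (hr0 : 0 <= rho) (hr1 : rho <= 1)
  (hx : forall j, 0 < x j) :
  se2 *: 1%:M + M0half x *m Sigma_gamma J sg2 rho *m M0half x =
  diag_mx (\row_j (se2 + sg2 * (1 - rho) * x j)) *m
   (1%:M + (\col_j (sg2 * rho * Num.sqrt (x j) / (se2 + sg2 * (1 - rho) * x j)))
      *m (\row_j Num.sqrt (x j))).
Proof.
apply/matrixP => i k.
rewrite /M0half /Sigma_gamma !mul_diag_mx mul_mx_diag !mxE !big_ord1 !mxE.
have hc : se2 + sg2 * (1 - rho) * x i != 0.
  apply/lt0r_neq0; have h1 : 0 <= sg2 * (1 - rho) by nra.
  have := hx i; nra.
case: (eqVneq i k) => [<-|hik] /=.
  have sq : Num.sqrt (x i) * Num.sqrt (x i) = x i.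
    by rewrite -expr2 sqr_sqrtr // ltW.
  move: hc; set s := Num.sqrt (x i); rewrite -sq => hc; exact: aux_diag.
exact: aux_off.
Qed.

Lemma aux_sq (R : realType) (s b c : R) : s * (b * s / c) = b * (s * s / c).
Proof. by ring. Qed.

Lemma aux_fin (R : realType) (d P pc T : R) : pc != 0 -> T != 0 ->
  d * P / (pc * T) * P * d = d ^+ 2 * (P * P / pc / T).
Proof. by move=> h1 h2; field; rewrite h1 h2. Qed.

Lemma det_Mbeta (R : realType) (J : nat) (A : 'M[R]_J) (se2 sg2 rho : R) (x : 'I_J -> R)
  (hse : 0 < se2) (hsg : 0 < sg2) (hr0 : 0 <= rho) (hr1 : rho <= 1)
  (hx : forall j, 0 < x j) :
  \det (Mbeta A se2 sg2 rho x) =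
  \det A ^+ 2 * ((\prod_j (x j / (se2 + sg2 * (1 - rho) * x j))) /
     (1 + sg2 * rho * \sum_j (x j / (se2 + sg2 * (1 - rho) * x j)))).
Proof.
have hc : forall j, 0 < se2 + sg2 * (1 - rho) * x j.
  move=> j; have h1 : 0 <= sg2 * (1 - rho) by nra.
  have := hx j; nra.
set c := fun j => se2 + sg2 * (1 - rho) * x j.
have hS : 0 <= \sum_j (x j / c j).
  by apply: sumr_ge0 => j _; apply: divr_ge0; apply: ltW; [exact: hx|exact: hc].
have hdK : \det (se2 *: 1%:M + M0half x *m Sigma_gamma J sg2 rho *m M0half x) =
   (\prod_j c j) * (1 + sg2 * rho * \sum_j (x j / c j)).
  rewrite K_eq // det_mulmx det_diag det_rank1; congr (_ * (1 + _)).
    by apply: eq_bigr => j _; rewrite mxE.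
  rewrite mxE mulr_sumr; apply: eq_bigr => j _; rewrite !mxE.
  have sq : Num.sqrt (x j) * Num.sqrt (x j) = x j.
    by rewrite -expr2 sqr_sqrtr // ltW.
  by rewrite aux_sq sq.
rewrite /Mbeta !det_mulmx det_inv hdK det_tr /M0half det_diag.
have -> : \prod_j (\row_j Num.sqrt (x j)) 0 j = \prod_j Num.sqrt (x j).
  by apply: eq_bigr => j _; rewrite mxE.
have hP : \prod_j Num.sqrt (x j) * \prod_j Num.sqrt (x j) = \prod_j x j.
  rewrite -big_split /=; apply: eq_bigr => j _.
  by rewrite -expr2 sqr_sqrtr // ltW.
have hpc : \prod_j c j != 0.
  by apply/lt0r_neq0; apply: prodr_gt0 => j _; exact: hc.
have h1 : 1 + sg2 * rho * \sum_j (x j / c j) != 0.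
  apply/lt0r_neq0; have : 0 <= sg2 * rho by nra. nra.
rewrite prodf_div.
set P := \prod_j Num.sqrt (x j).
set S := \sum_j (x j / c j).
rewrite -hP.
move: hpc h1; set pc := \prod_j c j; move=> hpc h1.
exact: aux_fin.
Qed.
Lemma tangent (R : realType) (se2 a z m : R) : 0 < se2 -> 0 <= a -> 0 <= z -> 0 <= m ->
  z / (se2 + a * z) <= m / (se2 + a * m) + se2 / (se2 + a * m) ^+ 2 * (z - m).
Proof.
move=> hs ha hz hm.
have hcz : 0 < se2 + a * z by have := mulr_ge0 ha hz; lra.
have hcm : 0 < se2 + a * m by have := mulr_ge0 ha hm; lra.
rewrite -subr_ge0.
have -> : m / (se2 + a * m) + se2 / (se2 + a * m) ^+ 2 * (z - m) - z / (se2 + a * z)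
   = a * se2 * (z - m) ^+ 2 / ((se2 + a * m) ^+ 2 * (se2 + a * z)).
  by field; rewrite !lt0r_neq0.
apply: divr_ge0; first by apply: mulr_ge0; [apply: mulr_ge0; lra|apply: sqr_ge0].
by apply: mulr_ge0; [apply: sqr_ge0|apply: ltW].
Qed.

Lemma pow_step (R : realType) (n : nat) (b s t : R) : (0 < n)%N ->
  0 <= b -> 0 <= s -> s <= t ->
  s ^+ n / (1 + b * (s *+ n)) <= t ^+ n / (1 + b * (t *+ n)).
Proof.
case: n => [//|n] _ hb hs hst.
have ht : 0 <= t := le_trans hs hst.
have hN : 0 <= (n.+1)%:R :> R by apply: ler0n.
rewrite -[s *+ _]mulr_natr -[t *+ _]mulr_natr.
move: hN; move: ((n.+1)%:R : R) => N hN.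
have hDs : 0 < 1 + b * (s * N).
  by apply: (lt_le_trans ltr01); rewrite lerDl (mulr_ge0 hb (mulr_ge0 hs hN)).
have hDt : 0 < 1 + b * (t * N).
  by apply: (lt_le_trans ltr01); rewrite lerDl (mulr_ge0 hb (mulr_ge0 ht hN)).
rewrite ler_pdivlMr // mulrAC ler_pdivrMr //.
have hp : s ^+ n <= t ^+ n by apply: lerXn2r; rewrite ?nnegrE.
have hp0 : 0 <= s ^+ n by apply: exprn_ge0.
rewrite !exprS.
set p := s ^+ n in hp hp0 *; set q := t ^+ n in hp *.
have h1 : s * p <= t * q by apply: ler_pM.
have h2 : 0 <= b * N * s * t.
  by apply: mulr_ge0; [apply: mulr_ge0; [apply: mulr_ge0|]|].
have h3 : b * N * s * t * p <= b * N * s * t * q by apply: ler_wpM2l.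
have -> : s * p * (1 + b * (t * N)) = s * p + b * N * s * t * p by ring.
have -> : t * q * (1 + b * (s * N)) = t * q + b * N * s * t * q by ring.
by apply: lerD.
Qed.
Lemma agm (R : realType) n (y : 'I_n -> R) : (forall j, 0 <= y j) ->
  \prod_j y j <= ((\sum_j y j) / n%:R) ^+ n.
Proof.
move=> hy.
have h := (leif_AGM (A := predT) (E := y) (fun j _ => hy j)).1.
rewrite cardT size_enum_ord in h; exact: h.
Qed.

Lemma Fineq (R : realType) (n : nat) (hn : (0 < n)%N) (se2 a b I : R) (x : 'I_n -> R) :
  0 < se2 -> 0 <= a -> 0 <= b -> (forall j, 0 < x j) -> \sum_j x j = I ->
  (\prod_j (x j / (se2 + a * x j))) / (1 + b * \sum_j (x j / (se2 + a * x j)))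
  <= (\prod_(j < n) (I / n%:R / (se2 + a * (I / n%:R)))) /
     (1 + b * \sum_(j < n) (I / n%:R / (se2 + a * (I / n%:R)))).
Proof.
move=> hse ha hb hx hsx.
have hn0 : 0 < n%:R :> R by rewrite ltr0n.
set m := I / n%:R.
have hI : 0 <= I by rewrite -hsx; apply: sumr_ge0 => j _; apply: ltW.
have hm : 0 <= m by apply: divr_ge0 => //; apply: ltW.
have hmn : m *+ n = I by rewrite /m -mulr_natr divfK // lt0r_neq0.
set t := m / (se2 + a * m).
have hcm : 0 < se2 + a * m by have := mulr_ge0 ha hm; lra.
have ht : 0 <= t by apply: divr_ge0 => //; apply: ltW.
have hy : forall j, 0 <= x j / (se2 + a * x j).
  move=> j; have hxj := hx j; apply: divr_ge0; first exact: ltW.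
  have := mulr_ge0 ha (ltW hxj); lra.
set y := fun j => x j / (se2 + a * x j).
have hsum : \sum_j y j <= t *+ n.
  apply: le_trans (ler_sum _ (fun j _ => @tangent R se2 a (x j) m hse ha (ltW (hx j)) hm)) _.
  rewrite big_split /= sumr_const card_ord -mulr_sumr sumrB sumr_const card_ord.
  by rewrite hsx hmn subrr mulr0 addr0.
set S := \sum_j (x j / (se2 + a * x j)).
set P := \prod_j (x j / (se2 + a * x j)).
have hS0 : 0 <= S by apply: sumr_ge0 => j _; exact: hy.
have hsum' : S <= t *+ n := hsum.
set s := S / n%:R.
have hsS : s *+ n = S by rewrite /s -mulr_natr divfK // lt0r_neq0.
have hst : s <= t by rewrite /s ler_pdivrMr // mulr_natr.
have hs0 : 0 <= s by apply: divr_ge0 => //; apply: ltW.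
have hP : P <= s ^+ n := @agm R n (fun j => x j / (se2 + a * x j)) hy.
have hD : 0 < 1 + b * S by have := mulr_ge0 hb hS0; lra.
rewrite prodr_const sumr_const card_ord.
apply: (@le_trans _ _ (s ^+ n / (1 + b * (s *+ n)))); last exact: pow_step.
rewrite hsS; apply: ler_wpM2r => //; rewrite invr_ge0; exact: ltW.
Qed.

Lemma estimable_pos (R : realType) (J : nat) (A : 'M[R]_J) (I : R) (xi : 'I_J -> R) :
  approx_design I xi -> estimable A xi -> forall j, 0 < xi j.
Proof.
move=> [hge _] [hr hs] j.
have hrk : \rank (M0 xi) = J.
  have := mxrankS hs; rewrite !mxrank_tr hr => h.
  by apply/eqP; rewrite eqn_leq rank_leq_row h.
have hu : M0 xi \in unitmx by rewrite -row_full_unit /row_full hrk.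
move: hu; rewrite unitmxE unitfE /M0 det_diag (bigD1 j) //= mxE.
rewrite lt_def hge andbT; apply: contraNneq => ->; by rewrite mul0r.
Qed.

Lemma uniform_ok (R : realType) (J : nat) (hJ : (0 < J)%N) (A : 'M[R]_J) (I : R) :
  A \in unitmx -> 0 < I ->
  approx_design I (@uniform_design R J I) /\ estimable A (@uniform_design R J I).
Proof.
move=> hA hI.
have hn0 : 0 < J%:R :> R by rewrite ltr0n.
split; first split.
- by move=> j; rewrite /uniform_design; apply: divr_ge0 => //; apply: ltW.
  rewrite /uniform_design sumr_const card_ord -[I / _ *+ _]mulr_natr divfK //.
  exact: lt0r_neq0.
split; first exact: mxrank_unit.
apply: submx_full; rewrite row_full_unit unitmx_tr unitmxE unitfE /M0 det_diag.
under eq_bigr do rewrite mxE.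
rewrite prodr_const card_ord expf_neq0 // /uniform_design.
by apply: lt0r_neq0; apply: divr_gt0.
Qed.

Theorem lemma4 (R : realType) (J : nat) (hJ : (0 < J)%N)
  (se2 sg2 rho I : R) (hse : 0 < se2) (hsg : 0 < sg2)
  (hrho0 : 0 <= rho) (hrho1 : rho <= 1)
  (A : 'M[R]_J) (hA : A \in unitmx) (hI : 0 < I) :
  D_optimal A se2 sg2 rho I (@uniform_design R J I).
Proof.
have [hud hue] := @uniform_ok R J hJ A I hA hI.
split; first exact: hud.
split; first exact: hue.
move=> xi hd he.
have hx := @estimable_pos R J A I xi hd he.
have hn0 : 0 < J%:R :> R by rewrite ltr0n.
have hux : forall j, 0 < @uniform_design R J I j.
  by move=> j; rewrite /uniform_design; apply: divr_gt0.
have ha : 0 <= sg2 * (1 - rho) by apply: mulr_ge0; [apply: ltW|rewrite subr_ge0].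
have hb : 0 <= sg2 * rho by apply: mulr_ge0 => //; apply: ltW.
have hdA : 0 < \det A ^+ 2.
  rewrite lt0r sqrf_eq0 sqr_ge0 andbT.
  by move: hA; rewrite unitmxE unitfE.
have Fpos : forall x : 'I_J -> R, (forall j, 0 < x j) ->
   0 < (\prod_j (x j / (se2 + sg2 * (1 - rho) * x j))) /
     (1 + sg2 * rho * \sum_j (x j / (se2 + sg2 * (1 - rho) * x j))).
  move=> x hxp.
  have hc : forall j, 0 < se2 + sg2 * (1 - rho) * x j.
    by move=> j; have := mulr_ge0 ha (ltW (hxp j)); lra.
  have hy : forall j, 0 < x j / (se2 + sg2 * (1 - rho) * x j).
    by move=> j; apply: divr_gt0.
  apply: divr_gt0; first by apply: prodr_gt0 => j _.
  have : 0 <= \sum_j (x j / (se2 + sg2 * (1 - rho) * x j)).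
    by apply: sumr_ge0 => j _; apply: ltW.
  by move=> hS; have := mulr_ge0 hb hS; lra.
rewrite !det_Mbeta //.
rewrite ler_ln ?posrE; last by apply: mulr_gt0 => //; apply: Fpos.
  2: by apply: mulr_gt0 => //; apply: Fpos.
apply: ler_wpM2l; first exact: ltW.
have [_ hsx] := hd.
rewrite /uniform_design.
exact: (@Fineq R J hJ se2 (sg2 * (1 - rho)) (sg2 * rho) I xi hse ha hb hx hsx).
Qed.
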